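(* BC, MS and FT satisfy clearance: for every finite candidate set $C$, every profile $P$ over $C$ and every candidate $x\in C$ approved by no ballot of $P$, every axis $\triangleleft\in f(P)$ is such that there is no ballot $A\in P$ and $y,z\in A$ with $y\triangleleft x\triangleleft z$. VD and MF fail clearance: for each $f\in\{\mathrm{VD},\mathrm{MF}\}$ there exist $C$, a profile $P$, a never-approved candidate $x$, an axis $\triangleleft\in f(P)$ and a ballot $A\in P$ with $y,z\in A$ and $y\triangleleft x\triangleleft z$.
   Context: Let $C$ be a finite set of candidates. An approval ballot is a nonempty subset $A\subseteq C$; a profile is a finite sequence of ballots. An axis is a strict linear order $\triangleleft$ on $C$; $a\trianglelefteq b$ means $a\triangleleft b$ or $a=b$. A ballot $A$ is an interval of $\triangleleft$ if for all $a,b\in A$ and every $c$ with $a\triangleleft c\triangleleft b$ we have $c\in A$. For a cost function $\mathrm{cost}_f$, the scoring rule returns $f(P)=\arg\min_{\triangleleft}\sum_{A\in P}\mathrm{cost}_f(A,\triangleleft)$ over all axes on $C$. The five rules are the scoring rules with costs: $\mathrm{cost}_{\mathrm{VD}}(A,\triangleleft)=0$ if $A$ is an interval of $\triangleleft$ and $1$ otherwise; $\mathrm{cost}_{\mathrm{MF}}(A,\triangleleft)=\min_{x,y\in A,\ x\trianglelefteq y}\big(|\{z\in A: z\triangleleft x \text{ or } y\triangleleft z\}|+|\{z\notin A: x\triangleleft z\triangleleft y\}|\big)$; $\mathrm{cost}_{\mathrm{BC}}(A,\triangleleft)=|\{b\notin A: a\triangleleft b\triangleleft c \text{ for some } a,c\in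 A\}|$; $\mathrm{cost}_{\mathrm{MS}}(A,\triangleleft)=\sum_{x\in C\setminus A}\min\big(|\{y\in A:y\triangleleft x\}|,\,|\{y\in A:x\triangleleft y\}|\big)$; $\mathrm{cost}_{\mathrm{FT}}(A,\triangleleft)=\sum_{x\in C\setminus A}|\{y\in A:y\triangleleft x\}|\cdot|\{y\in A:x\triangleleft y\}|$. *)

(* Defs.v *)
From mathcomp Require Import all_boot.
Set Implicit Arguments. Unset Strict Implicit. Unset Printing Implicit Defensive.

(* Candidates: a finite type T.  An axis is a strict linear order r on T
   (x ◁ y is [r x y]).  Ballots: sets {set T}; a profile is a seq of ballots. *)

Definition is_axis (T : finType) (r : rel T) : Prop :=
  (forall x, ~~ r x x) /\
  (forall x y z, r x y -> r y z -> r x z) /\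
  (forall x y, x != y -> r x y || r y x).

Definition axle (T : finType) (r : rel T) (x y : T) : bool := r x y || (x == y).

Definition is_interval (T : finType) (A : {set T}) (r : rel T) : bool :=
  [forall a, forall b, forall c,
     [&& a \in A, b \in A, r a c & r c b] ==> (c \in A)].

Definition cost_VD (T : finType) (A : {set T}) (r : rel T) : nat :=
  if is_interval A r then 0 else 1.

(* min over x,y in A with x ⊴ y; #|T| is a harmless neutral element since
   every candidate value is <= #|T| and A is nonempty for ballots. *)
Definition cost_MF (T : finType) (A : {set T}) (r : rel T) : nat :=
  \big[minn/#|T|]_(x in A) \big[minn/#|T|]_(y in A | axle r x y)
     (#|[set z in A | r z x || r y z]| + #|[set z in ~: A | r x z && r z y]|).

Definition cost_BC (T : finType) (A : {set T}) (r : rel T) : nat :=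
  #|[set b in ~: A | [exists a in A, exists c in A, r a b && r b c]]|.

Definition cost_MS (T : finType) (A : {set T}) (r : rel T) : nat :=
  \sum_(x in ~: A) minn #|[set y in A | r y x]| #|[set y in A | r x y]|.

Definition cost_FT (T : finType) (A : {set T}) (r : rel T) : nat :=
  \sum_(x in ~: A) (#|[set y in A | r y x]| * #|[set y in A | r x y]|).

Inductive rule := VD | MF | BC | MS | FT.

Definition cost (f : rule) (T : finType) : {set T} -> rel T -> nat :=
  match f with
  | VD => @cost_VD T | MF => @cost_MF T | BC => @cost_BC T
  | MS => @cost_MS T | FT => @cost_FT T
  end.

Definition score (f : rule) (T : finType) (P : seq {set T}) (r : rel T) : nat :=
  \sum_(A <- P) cost f A r.

Definition in_rule (f : rule) (T : finType) (P : seq {set T}) (r : rel T) : Prop :=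
  is_axis r /\ forall r' : rel T, is_axis r' -> score f P r <= score f P r'.

Definition is_profile (T : finType) (P : seq {set T}) : Prop :=
  forall A, A \in P -> A != set0.

Definition clearance (f : rule) : Prop :=
  forall (T : finType) (P : seq {set T}) (x : T),
    is_profile P -> (forall A, A \in P -> x \notin A) ->
    forall r : rel T, in_rule f P r ->
      ~ (exists A, [/\ A \in P &
           exists y z, [/\ y \in A, z \in A, r y x & r x z]]).

(* Main.v *)
Require Import Defs.
From mathcomp Require Import all_boot.
From mathcomp Require Import zify.

Section Gen.
Variable T : finType.

Definition mv (r : rel T) (x : T) : rel T :=
  fun a b => if b == x then a != x else (a != x) && r a b.

Lemma mv_axis (r : rel T) (x : T) : is_axis r -> is_axis (mv r x).
Proof.
move=> [irr [tr tot]]; split; [|split].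
- move=> a; rewrite /mv /=; have [_|ax] := eqVneq a x; first by [].
  by rewrite irr.
- move=> a b c; rewrite /mv /=.
  have [_|cx] := eqVneq c x.
  + by have [_|_] := eqVneq b x; [|case/andP].
  + have [_|bx] := eqVneq b x; first by [].
    by move=> /andP[-> rab] /andP[_ rbc]; exact: tr rab rbc.
- move=> a b ab; rewrite /mv /=.
  have [bx|bx] := eqVneq b x; first by rewrite -bx ab.
  have [ax|ax] := eqVneq a x; first by rewrite /= ?orbT ?ax ?eqxx /= ?orbT.
  by rewrite /= tot.
Qed.

Lemma mv_ne (r : rel T) (x a b : T) : a != x -> b != x -> mv r x a b = r a b.
Proof. by rewrite /mv /= => -> /negbTE ->. Qed.

Lemma mv_x (r : rel T) (x b : T) : mv r x x b = false.
Proof. by rewrite /mv eqxx; case: (b == x). Qed.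

Lemma sum_lt (P : seq {set T}) (g h : {set T} -> nat) A :
  (forall B, B \in P -> g B <= h B) -> A \in P -> g A < h A ->
  \sum_(B <- P) g B < \sum_(B <- P) h B.
Proof.
elim: P => // B P IH H; rewrite inE => /orP [/eqP ->|AP] lt; rewrite !big_cons.
- have le : \sum_(B0 <- P) g B0 <= \sum_(B0 <- P) h B0.
    rewrite big_seq [X in _ <= X]big_seq; apply: leq_sum => i iP.
    by apply: H; rewrite inE iP orbT.
  by rewrite -addSn; apply: leq_add.
- rewrite -addnS; apply: leq_add; first by apply: H; rewrite inE eqxx.
  by apply: IH => // B0 B0P; apply: H; rewrite inE B0P orbT.
Qed.

Definition cost_gen (h : nat -> nat -> nat) (B : {set T}) (r : rel T) :=
  \sum_(u in ~: B) h #|[set y in B | r y u]| #|[set y in B | r u y]|.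

Lemma cost_gen_mv h (r : rel T) (x : T) (B : {set T}) : (forall n, h n 0 = 0) -> x \notin B ->
  cost_gen h B (mv r x) + h #|[set y in B | r y x]| #|[set y in B | r x y]|
  = cost_gen h B r.
Proof.
move=> h0 xB; rewrite /cost_gen.
have xC : x \in ~: B by rewrite inE.
rewrite (bigD1 x xC) [X in _ = X](bigD1 x xC) /=.
have -> : [set y in B | mv r x x y] = set0.
  by apply/setP => y; rewrite !inE mv_x andbF.
rewrite cards0 h0 add0n addnC; congr (_ + _); apply: eq_bigr => u /andP[_ ux].
have E : forall y, y \in B -> y != x by move=> y yB; apply: contraNneq xB => <-.
congr (h _ _); apply: eq_card => y; rewrite !inE;
  case yB: (y \in B) => //=; rewrite mv_ne //; exact: E.
Qed.

Lemma cost_gen_le h (r : rel T) (x : T) (B : {set T}) : (forall n, h n 0 = 0) -> x \notin B ->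
  cost_gen h B (mv r x) <= cost_gen h B r.
Proof. by move=> h0 xB; rewrite -(@cost_gen_mv h r x B h0 xB) leq_addr. Qed.

Lemma cost_gen_lt h (r : rel T) (x : T) (B : {set T}) y z : (forall n, h n 0 = 0) ->
  (forall m n, 0 < m -> 0 < n -> 0 < h m n) -> x \notin B ->
  y \in B -> z \in B -> r y x -> r x z ->
  cost_gen h B (mv r x) < cost_gen h B r.
Proof.
move=> h0 hp xB yB zB ryx rxz; rewrite -(@cost_gen_mv h r x B h0 xB) -addn1 leq_add2l.
apply: hp; apply/card_gt0P.
- by exists y; rewrite inE yB.
- by exists z; rewrite inE zB.
Qed.

Definition BCset (B : {set T}) (r : rel T) :=
  [set b in ~: B | [exists a in B, exists c in B, r a b && r b c]].

Lemma BC_sub (r : rel T) (x : T) (B : {set T}) : x \notin B -> BCset B (mv r x) \subset BCset B r.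
Proof.
move=> xB; apply/subsetP => b; rewrite !inE => /andP[bB /existsP[a /andP[aB /existsP[c /andP[cB]]]]].
have E : forall y, y \in B -> y != x by move=> y yB; apply: contraNneq xB => <-.
have [bx|bx'] := eqVneq b x; first by rewrite bx mv_x andbF.
rewrite (@mv_ne r x a b (E a aB) bx') (@mv_ne r x b c bx' (E c cB)) => H; rewrite bB /=; apply/existsP; exists a; rewrite aB /=.
by apply/existsP; exists c; rewrite cB.
Qed.

Lemma BC_le (r : rel T) (x : T) (B : {set T}) : x \notin B -> cost_BC B (mv r x) <= cost_BC B r.
Proof. by move=> xB; apply: subset_leq_card; apply: BC_sub. Qed.

Lemma BC_lt (r : rel T) (x : T) (B : {set T}) y z : x \notin B -> y \in B -> z \in B -> r y x -> r x z ->
  cost_BC B (mv r x) < cost_BC B r.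
Proof.
move=> xB yB zB ryx rxz; apply: proper_card; apply/properP; split; first exact: BC_sub.
exists x.
- rewrite inE inE xB /=; apply/existsP; exists y; rewrite yB /=.
  by apply/existsP; exists z; rewrite zB ryx rxz.
- rewrite inE; apply/negP => /andP[_ /existsP[a /andP[_ /existsP[c /andP[_]]]]]; by rewrite mv_x andbF.
Qed.

End Gen.
Arguments mv {T} r x.

Lemma clear_gen f :
  (forall (T : finType) (B : {set T}) (r : rel T) (x : T), x \notin B -> cost f B (mv r x) <= cost f B r) ->
  (forall (T : finType) (B : {set T}) (r : rel T) (x y z : T), x \notin B -> y \in B -> z \in B ->
     r y x -> r x z -> cost f B (mv r x) < cost f B r) ->
  clearance f.
Proof.
move=> Hle Hlt T P x _ Hx r [Hax Hmin] [A [AP [y [z [yA zA ryx rxz]]]]].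
have := Hmin _ (@mv_axis T r x Hax) ; rewrite /score leqNgt => /negP; apply.
apply: (@sum_lt T P _ _ A) => //.
- by move=> B BP; apply: Hle; apply: Hx.
- by apply: (Hlt _ _ _ _ y z) => //; apply: Hx.
Qed.

Lemma clearBC : clearance BC.
Proof. apply: clear_gen => [T B r x | T B r x y z]; [exact: BC_le | exact: BC_lt]. Qed.

Lemma clearMS : clearance MS.
Proof.
apply: clear_gen => [T B r x xB | T B r x y z xB yB zB ryx rxz].
- exact: (@cost_gen_le T minn r x B (fun n => minn0 n) xB).
- apply: (@cost_gen_lt T minn r x B y z (fun n => minn0 n)) => //.
  by move=> m n; rewrite leq_min => -> ->.
Qed.

Lemma clearFT : clearance FT.
Proof.
apply: clear_gen => [T B r x xB | T B r x y z xB yB zB ryx rxz].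
- exact: (@cost_gen_le T muln r x B (fun n => muln0 n) xB).
- apply: (@cost_gen_lt T muln r x B y z (fun n => muln0 n)) => //.
  by move=> m n; rewrite muln_gt0 => -> ->.
Qed.
Set Implicit Arguments. Unset Strict Implicit. Unset Printing Implicit Defensive.

Lemma ie (T : finType) (A : {set T}) (r : rel T) a b c :
  is_interval A r -> a \in A -> b \in A -> r a c -> r c b -> c \in A.
Proof.
move=> /forallP/(_ a)/forallP/(_ b)/forallP/(_ c)/implyP H aA bA rac rcb.
by apply: H; rewrite aA bA rac rcb.
Qed.

Lemma two_side (T : finType) (r : rel T) a u v : is_axis r ->
  u != a -> v != a -> u != v -> (r u a && r v a) || (r a u && r a v) ->
  is_interval [set a; u] r -> is_interval [set a; v] r -> False.
Proof.
move=> [irr [tr tot]] ua va uv H Iu Iv.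
have ina : a \in [set a; u] by rewrite !inE eqxx.
have inu : u \in [set a; u] by rewrite !inE eqxx orbT.
have ina' : a \in [set a; v] by rewrite !inE eqxx.
have inv : v \in [set a; v] by rewrite !inE eqxx orbT.
have nu : v \notin [set a; u] by rewrite !inE negb_or va eq_sym uv.
have nv : u \notin [set a; v] by rewrite !inE negb_or ua uv.
case/orP: (tot u v uv) => ruv; case/orP: H => /andP[h1 h2].
- by move: nu; rewrite (ie Iu inu ina ruv h2).
- by move: nv; rewrite (ie Iv ina' inv h1 ruv).
- by move: nv; rewrite (ie Iv inv ina' ruv h1).
- by move: nu; rewrite (ie Iu ina inu h2 ruv).
Qed.

Lemma no3 (T : finType) (r : rel T) a b c d : is_axis r ->
  b != a -> c != a -> d != a -> b != c -> b != d -> c != d ->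
  is_interval [set a; b] r -> is_interval [set a; c] r -> is_interval [set a; d] r -> False.
Proof.
move=> ax ba ca da bc bd cd Ib Ic Id.
have side : forall u, u != a -> (r u a && ~~ r a u) || (r a u && ~~ r u a).
  move=> u ua; case: ax => [irr [tr tot]].
  case/orP: (tot u a ua) => h.
  - have: ~~ r a u by apply/negP => h'; move: (irr u); rewrite (tr _ _ _ h h').
    by move=> ->; rewrite h.
  - have: ~~ r u a by apply/negP => h'; move: (irr u); rewrite (tr _ _ _ h' h).
    by move=> ->; rewrite h orbT.
move: (side b ba) (side c ca) (side d da).
case/orP => /andP[hb _]; case/orP => /andP[hc _]; case/orP => /andP[hd _].
- by apply: (two_side ax ba ca bc _ Ib Ic); rewrite hb hc.
- by apply: (two_side ax ba ca bc _ Ib Ic); rewrite hb hc.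
- by apply: (two_side ax ba da bd _ Ib Id); rewrite hb hd.
- by apply: (two_side ax ca da cd _ Ic Id); rewrite hc hd orbT.
- by apply: (two_side ax ca da cd _ Ic Id); rewrite hc hd.
- by apply: (two_side ax ba da bd _ Ib Id); rewrite hb hd orbT.
- by apply: (two_side ax ba ca bc _ Ib Ic); rewrite hb hc orbT.
- by apply: (two_side ax ba ca bc _ Ib Ic); rewrite hb hc orbT.
Qed.

Lemma bigmin_le (I : eqType) (s : seq I) n (F : I -> nat) i :
  i \in s -> \big[minn/n]_(j <- s) F j <= F i.
Proof.
elim: s => // a s IH; rewrite inE big_cons => /orP[/eqP ->|iS].
- exact: geq_minl.
- exact: leq_trans (geq_minr _ _) (IH iS).
Qed.

Lemma bigmin0 (I : eqType) (s : seq I) n (F : I -> nat) :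
  0 < n -> \big[minn/n]_(j <- s) F j = 0 -> exists2 j, j \in s & F j = 0.
Proof.
move=> n0; elim: s => [|a s IH]; first by rewrite big_nil => h; move: n0; rewrite h.
rewrite big_cons => /eqP; rewrite -leqn0 geq_min !leqn0 => /orP[/eqP h|/eqP h].
- by exists a; rewrite ?inE ?eqxx.
- by case: (IH h) => j js Fj; exists j; rewrite // inE js orbT.
Qed.

Lemma MF0 (T : finType) (A : {set T}) (r : rel T) : 0 < #|T| -> is_axis r ->
  cost_MF A r = 0 -> is_interval A r.
Proof.
move=> T0 ax; have [irr [tr tot]] := ax.
rewrite /cost_MF -big_filter => /(bigmin0 T0) [u]; rewrite mem_filter => /andP[uA _].
rewrite -big_filter => /(bigmin0 T0) [v]; rewrite mem_filter => /andP[/andP[vA uv] _].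
move/eqP; rewrite addn_eq0 !cards_eq0 => /andP[/eqP E1 /eqP E2].
apply/forallP=> a; apply/forallP=> b; apply/forallP=> c; apply/implyP=> /and4P[aA bA rac rcb].
apply/negPn/negP => cA.
have: a \notin [set z in A | r z u || r v z] by rewrite E1 inE.
rewrite inE aA /= negb_or => /andP[nau nva].
have: b \notin [set z in A | r z u || r v z] by rewrite E1 inE.
rewrite inE bA /= negb_or => /andP[nbu nvb].
have ruc : r u c.
  have [E|au] := eqVneq a u; first by rewrite -E.
  by case/orP: (tot a u au) => h; [rewrite h in nau | exact: tr _ _ _ h rac].
have rcv : r c v.
  have [bv|bv] := eqVneq b v; first by rewrite -bv.
  by case/orP: (tot b v bv) => h; [exact: tr _ _ _ rcb h | rewrite h in nvb].
have: c \in [set z in ~: A | r u z && r z v] by rewrite !inE cA ruc rcv.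
by rewrite E2 inE.
Qed.

Definition o0 : 'I_5 := @Ordinal 5 0 isT.
Definition o1 : 'I_5 := @Ordinal 5 1 isT.
Definition o2 : 'I_5 := @Ordinal 5 2 isT.
Definition o3 : 'I_5 := @Ordinal 5 3 isT.
Definition o4 : 'I_5 := @Ordinal 5 4 isT.
Definition pos (u : 'I_5) : nat := nth 0 [:: 1; 0; 2; 4; 3] u.
Definition rr : rel 'I_5 := fun u v => pos u < pos v.
Definition PP : seq {set 'I_5} := [:: [set o0; o1]; [set o0; o2]; [set o0; o3]].

Lemma rr_axis : is_axis rr.
Proof.
split; [|split].
- by move=> u; rewrite /rr ltnn.
- by move=> u v w; rewrite /rr; apply: ltn_trans.
- by case=> [[|[|[|[|[|?]]]]] ?] [[|[|[|[|[|?]]]]] ?].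
Qed.

Lemma int01 : is_interval [set o0; o1] rr.
Proof.
apply/forallP=> a; apply/forallP=> b; apply/forallP=> c; apply/implyP.
move: a b c; do 3 case=> [[|[|[|[|[|?]]]]] ?]; by rewrite !inE.
Qed.

Lemma int02 : is_interval [set o0; o2] rr.
Proof.
apply/forallP=> a; apply/forallP=> b; apply/forallP=> c; apply/implyP.
move: a b c; do 3 case=> [[|[|[|[|[|?]]]]] ?]; by rewrite !inE.
Qed.

Lemma scoreVD : score VD PP rr <= 1.
Proof.
rewrite /score !big_cons big_nil /= /cost_VD int01 int02 /=.
by case: ifP.
Qed.

Lemma mf_le (A : {set 'I_5}) u v : u \in A -> v \in A -> axle rr u v ->
  cost_MF A rr <= #|[set z in A | rr z u || rr v z]| + #|[set z in ~: A | rr u z && rr z v]|.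
Proof.
move=> uA vA uv; rewrite /cost_MF -big_filter.
have m1 : u \in [seq x <- index_enum 'I_5 | x \in A] by rewrite mem_filter uA mem_index_enum.
apply: leq_trans (bigmin_le #|'I_5| _ m1) _.
rewrite -big_filter; apply: bigmin_le; by rewrite mem_filter /= vA uv mem_index_enum.
Qed.

Lemma scoreMF : score MF PP rr <= 1.
Proof.
rewrite /score !big_cons big_nil /=.
have h1 : cost_MF [set o0; o1] rr = 0.
  apply/eqP; rewrite -leqn0; apply: leq_trans (mf_le (u := o1) (v := o0) _ _ _) _;
    rewrite ?inE //.
  rewrite leqn0 addn_eq0 !cards_eq0; apply/andP; split; apply/eqP/setP;
    case=> [[|[|[|[|[|?]]]]] ?]; by rewrite !inE.
have h2 : cost_MF [set o0; o2] rr = 0.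
  apply/eqP; rewrite -leqn0; apply: leq_trans (mf_le (u := o0) (v := o2) _ _ _) _;
    rewrite ?inE //.
  rewrite leqn0 addn_eq0 !cards_eq0; apply/andP; split; apply/eqP/setP;
    case=> [[|[|[|[|[|?]]]]] ?]; by rewrite !inE.
have h3 : cost_MF [set o0; o3] rr <= 1.
  apply: leq_trans (mf_le (u := o0) (v := o0) _ _ _) _; rewrite ?inE ?eqxx //.
  have -> : [set z in [set o0; o3] | rr z o0 || rr o0 z] = [set o3].
    by apply/setP; case=> [[|[|[|[|[|?]]]]] ?]; rewrite !inE.
  have -> : [set z in ~: [set o0; o3] | rr o0 z && rr z o0] = set0.
    by apply/setP; case=> [[|[|[|[|[|?]]]]] ?]; rewrite !inE.
  by rewrite cards1 cards0.
by rewrite h1 h2 addn0.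
Qed.

Lemma rr_prof : is_profile PP.
Proof.
move=> B; rewrite !inE => /or3P[] /eqP ->; apply/set0Pn; exists o0; by rewrite !inE eqxx.
Qed.

Lemma rr_x : forall B, B \in PP -> o4 \notin B.
Proof. move=> B; rewrite !inE => /or3P[] /eqP ->; by rewrite !inE. Qed.

Lemma lowerVD (r : rel 'I_5) : is_axis r -> 1 <= score VD PP r.
Proof.
move=> ax; rewrite /score !big_cons big_nil /= /cost_VD.
case I1: (is_interval _ r); case I2: (is_interval _ r); case I3: (is_interval _ r) => //.
by exfalso; apply: (@no3 _ r o0 o1 o2 o3 ax).
Qed.

Lemma lowerMF (r : rel 'I_5) : is_axis r -> 1 <= score MF PP r.
Proof.
move=> ax; rewrite lt0n; apply/negP.
rewrite /score !big_cons big_nil /= addn0 !addn_eq0 => /and3P[/eqP h1 /eqP h2 /eqP h3].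
have T0 : 0 < #|'I_5| by rewrite card_ord.
by apply: (@no3 _ r o0 o1 o2 o3 ax) => //; apply: MF0.
Qed.

Theorem mainTheorem7 :
  (clearance BC /\ clearance MS /\ clearance FT) /\
  (forall f, (f = VD \/ f = MF) ->
     exists (T : finType) (P : seq {set T}) (x : T) (r : rel T) (A : {set T}) (y z : T),
       [/\ is_profile P, (forall B, B \in P -> x \notin B), in_rule f P r,
           A \in P & [/\ y \in A, z \in A, r y x & r x z]]).
Proof.
split; first by split; [exact: clearBC | split; [exact: clearMS | exact: clearFT]].
move=> f Hf; exists ('I_5 : finType), PP, o4, rr, [set o0; o3], o0, o3.
split.
- exact: rr_prof.
- exact: rr_x.
- split; first exact: rr_axis.
  move=> r' ax; case: Hf => ->.
  + exact: leq_trans scoreVD (lowerVD ax).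
  + exact: leq_trans scoreMF (lowerMF ax).
- by rewrite !inE eqxx !orbT.
- by split; rewrite ?inE ?eqxx ?orbT.
Qed.
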